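(* Let $d=p$ be a prime with $p\equiv 3 \bmod 4$, and let $X$ be the cyclic shift operator $X|r\rangle=|r+1\rangle$ (indices modulo $d$). Let $|\mathbf v\rangle=(\sqrt{x_0},v_1,\dots,v_{d-1})^{\rm T}$ be a vector with $x_0=-2-\sqrt{d+1}$ (so $\sqrt{x_0}$ is purely imaginary), $|v_j|^2=1$, $v_{-j}=-v_j^*$, and of Legendre form: for $j\neq 0$, $v_j=x_1$ if $j$ is a quadratic residue modulo $p$ and $v_j=-1/x_1$ otherwise (so $x_1$ is a phase factor, $x_1^*=1/x_1$). Write $\left(\frac{j}{d}\right)$ for the Legendre symbol. If $\left(\frac{j}{d}\right)=1$ and $d\equiv 3\bmod 8$, then $$\langle \mathbf v|X^{-2j}|\mathbf v\rangle=\sum_{k=0}^{d-1}v_k^*v_{k+2j}=\frac{d-3}{2}-\frac{d-3}{4}\frac{1}{x_1^2}-\frac{d+1}{4}x_1^2+\frac{2\sqrt{x_0}}{x_1}.$$ If $\left(\frac{j}{d}\right)=1$ and $d\equiv 7\bmod 8$, then $$\langle \mathbf v|X^{-2j}|\mathbf v\rangle=\frac{d-3}{2}-\frac{d+1}{4}\frac{1}{x_1^2}-\frac{d-3}{4}x_1^2-2\sqrt{x_0}\,x_1.$$ If $\left(\frac{j}{d}\right)=-1$, the corresponding formulas are obtained by substituting $x_1\mapsto -1/x_1$ in these equations.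
   Context: Here $d=p\equiv 3\bmod 4$ prime, $X$ is the Weyl–Heisenberg shift $X|r\rangle=|r+1\rangle$ on $\mathbb C^d$ with basis indexed by integers mod $d$, and $|\mathbf v\rangle$ is an (unnormalized) almost flat ''Legendre vector'': first component $\sqrt{x_0}$ with $x_0=-2-\sqrt{d+1}$, remaining components of modulus one satisfying $v_{-j}=-v_j^*$, equal to a phase $x_1$ on quadratic residues and $-1/x_1$ on non-residues (consistent since $-1$ is a non-residue when $p\equiv 3\bmod 4$). *)

(* Defs.v *)
From mathcomp Require Import all_boot all_order all_algebra.
Set Implicit Arguments. Unset Strict Implicit. Unset Printing Implicit Defensive.
Import Order.TTheory GRing.Theory Num.Theory.
Local Open Scope ring_scope.

Definition qres (p j : nat) : bool :=
  (j %% p != 0)%N && [exists i : 'I_p, ((i * i) %% p == j %% p)%N].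

Definition legendre (p j : nat) : int :=
  if (j %% p == 0)%N then 0 else if qres p j then 1 else -1.

(* Legendre vector with entries indexed by integers mod p (represented by nat,
   reduced mod p): v_0 = s (a square root of x0), v_j = x1 on quadratic residues,
   v_j = -1/x1 on non-residues. *)
Definition legvec (C : numClosedFieldType) (p : nat) (s x1 : C) (k : nat) : C :=
  if (k %% p == 0)%N then s
  else if legendre p k == 1 then x1 else - x1^-1.

Definition corr (C : numClosedFieldType) (p : nat) (s x1 : C) (j : nat) : C :=
  \sum_(k < p) (legvec p s x1 k)^* * legvec p s x1 (k + 2 * j).

Definition rhs3 (C : numClosedFieldType) (p : nat) (s x : C) : C :=
  (p%:R - 3) / 2 - (p%:R - 3) / 4 * (x ^+ 2)^-1 - (p%:R + 1) / 4 * x ^+ 2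
  + 2 * s / x.

Definition rhs7 (C : numClosedFieldType) (p : nat) (s x : C) : C :=
  (p%:R - 3) / 2 - (p%:R + 1) / 4 * (x ^+ 2)^-1 - (p%:R - 3) / 4 * x ^+ 2
  - 2 * s * x.

(* Main.v *)
Require Import Defs.
From mathcomp Require Import all_boot all_order all_algebra finfield.
From mathcomp Require Import zify ring lra.
Set Implicit Arguments. Unset Strict Implicit. Unset Printing Implicit Defensive.
Import Order.TTheory GRing.Theory Num.Theory.
Local Open Scope ring_scope.

Lemma Fp_fermat p (pr : prime p) (x : 'F_p) : x != 0 -> x ^+ p.-1 = 1.
Proof.
move=> nz; have : x ^+ (p.-1).+1 = x by rewrite prednK ?prime_gt0 // -{2}(expf_card x) card_Fp.
rewrite exprS.
by move=> /(congr1 (fun y => y / x)); rewrite mulrC mulrA mulVf // mul1r divff.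
Qed.

Lemma Fp_fermat2 p (pr : prime p) h (ph : p = h.*2.+1) (x : 'F_p) :
  x != 0 -> x ^+ h.*2 = 1.
Proof.
move=> nz; have e : p.-1 = h.*2 by rewrite ph.
rewrite -e; exact: Fp_fermat.
Qed.

Lemma Fp_nat_eq p (pr : prime p) a b : ((a%:R : 'F_p) == b%:R) = (a %% p == b %% p)%N.
Proof.
apply/eqP/eqP => [E|E].
  by have := congr1 (@nat_of_ord _) E; rewrite !val_Fp_nat.
by apply: val_inj; rewrite /= !val_Fp_nat.
Qed.

Lemma Fp_nat0 p (pr : prime p) a : ((a%:R : 'F_p) == 0) = (p %| a)%N.
Proof. by rewrite (dvdn_pcharf (pchar_Fp pr)). Qed.

Lemma Fp_val p (pr : prime p) (x : 'F_p) : ((val x) < p)%N /\ x = (val x)%:R.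
Proof.
have lt : ((val x) < p)%N.
  by apply: (leq_trans (ltn_ord x)); rewrite Fp_cast.
split=> //; apply: val_inj; rewrite /= val_Fp_nat // modn_small //.
Qed.

Lemma Fp_sq_inj p (pr : prime p) h (ph : p = h.*2.+1) :
  {in iota 1 h &, injective (fun i : nat => (i%:R : 'F_p) ^+ 2)}.
Proof.
move=> i k; rewrite !mem_iota => /andP[i1 i2] /andP[k1 k2] /eqP.
rewrite eqf_sqr => /orP[|]; rewrite -?natrN.
  rewrite Fp_nat_eq // !modn_small //; first by move/eqP.
    by rewrite ph; lia.
  by rewrite ph; lia.
rewrite -subr_eq0 opprK -natrD Fp_nat0 // => /dvdn_leq; rewrite ph; lia.
Qed.

Lemma euler p (pr : prime p) h (ph : p = h.*2.+1) (x : 'F_p) :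
  x != 0 -> (x ^+ h == 1) = [exists y : 'F_p, y * y == x].
Proof.
move=> nz; apply/idP/idP; last first.
  case/existsP=> y /eqP E; rewrite -E.
  have y0 : y != 0 by apply: contra nz => /eqP y0; rewrite -E y0 mulr0.
  by rewrite -expr2 -exprM mul2n (Fp_fermat2 pr ph y0).
move=> xh; apply: contraT => nsq.
pose rs := x :: [seq (i%:R : 'F_p) ^+ 2 | i <- iota 1 h].
have h0 : (0 < h)%N.
  by rewrite lt0n; apply/negP => /eqP h0; move: pr; rewrite ph h0.
have := @max_poly_roots _ ('X^h - 1) rs.
rewrite size_Xn_sub_1 // /rs /= size_map size_iota ltnn; apply.
- by rewrite -size_poly_eq0 size_Xn_sub_1.
- rewrite /= rootE !hornerE (eqP xh) subrr eqxx /=; apply/allP => z /mapP[i].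
  rewrite mem_iota => /andP[i1 i2] ->; rewrite rootE !hornerE -exprM mul2n.
  rewrite (Fp_fermat2 pr ph) ?subrr //.
  by rewrite Fp_nat0 //; apply/negP => /dvdn_leq; rewrite ph; lia.
- rewrite /= (map_inj_in_uniq (Fp_sq_inj pr ph)) iota_uniq andbT.
  apply/mapP => -[i _ E]; move/negP: nsq; apply; apply/existsP; exists (i%:R).
  by rewrite E expr2.
Qed.

Definition chiF (C : numClosedFieldType) p h (x : 'F_p) : C :=
  if x == 0 then 0 else if x ^+ h == 1 then 1 else -1.

Lemma Fp_m1 p (pr : prime p) h (ph : p = h.*2.+1) : (-1 : 'F_p) != 1.
Proof.
rewrite -subr_eq0 -opprD oppr_eq0 -(natrD _ 1 1) Fp_nat0 //.
by apply/negP => /dvdn_leq; rewrite ph; case: h ph => [|h] ph; [move: pr; rewrite ph|lia].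
Qed.

Lemma C_m1 (C : numClosedFieldType) : (-1 : C) != 1.
Proof. by rewrite -subr_eq0 -opprD oppr_eq0 -(natrD _ 1 1) pnatr_eq0. Qed.

Lemma Fp_pm1 p (pr : prime p) h (ph : p = h.*2.+1) (x : 'F_p) :
  x != 0 -> x ^+ h = 1 \/ x ^+ h = -1.
Proof.
move=> nz; have : (x ^+ h) ^+ 2 == 1 ^+ 2 by rewrite -exprM muln2 (Fp_fermat2 pr ph) // expr1n.
by rewrite eqf_sqr => /orP[] /eqP; [left|right].
Qed.

Lemma chi_sq (C : numClosedFieldType) p (pr : prime p) h (ph : p = h.*2.+1) (x : 'F_p) :
  x != 0 -> chiF C h x * chiF C h x = 1.
Proof.
move=> nz; rewrite /chiF (negbTE nz).
by case: (x ^+ h == 1); rewrite ?mulr1 ?mulrNN ?mulr1.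
Qed.

Lemma chi_mul (C : numClosedFieldType) p (pr : prime p) h (ph : p = h.*2.+1) (x y : 'F_p) :
  chiF C h (x * y) = chiF C h x * chiF C h y.
Proof.
rewrite /chiF mulf_eq0.
have [->|x0] := eqVneq x 0; first by rewrite /= mul0r.
have [->|y0] := eqVneq y 0; first by rewrite /= mulr0.
rewrite /=.
have m1 := Fp_m1 pr ph.
rewrite exprMn; case: (Fp_pm1 pr ph x0) => ->; case: (Fp_pm1 pr ph y0) => ->;
  rewrite ?mulr1 ?mulrNN ?mulr1 ?eqxx ?(negbTE m1) ?mulN1r ?mulrN1 ?(negbTE m1) ?opprK //.
Qed.

Lemma chi_neg1 (C : numClosedFieldType) p (pr : prime p) h (ph : p = h.*2.+1) :
  odd h -> chiF C h (-1 : 'F_p) = -1.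
Proof.
move=> oh; rewrite /chiF oppr_eq0 oner_eq0 -signr_odd oh expr1.
by rewrite (negbTE (Fp_m1 pr ph)).
Qed.

Lemma chi_sum (C : numClosedFieldType) p (pr : prime p) h (ph : p = h.*2.+1) :
  odd h -> \sum_(x : 'F_p) chiF C h x = 0.
Proof.
move=> oh; set S := \sum_(x : 'F_p) _.
have : S = - S.
  rewrite {1}/S (reindex_inj oppr_inj) /= /S -mulN1r mulr_sumr; apply: eq_bigr => x _.
  by rewrite -(mulN1r x) chi_mul // chi_neg1.
move/eqP; rewrite -subr_eq0 opprK -mulr2n mulrn_eq0 /=.
by move/eqP.
Qed.

Lemma chi_shift (C : numClosedFieldType) p h (a : 'F_p) :
  \sum_(x : 'F_p) chiF C h (x + a) = \sum_(x : 'F_p) chiF C h x.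
Proof. by rewrite [RHS](reindex_inj (addIr a)). Qed.

Lemma chi_corr (C : numClosedFieldType) p (pr : prime p) h (ph : p = h.*2.+1) (a : 'F_p) :
  odd h -> a != 0 -> \sum_(x : 'F_p) chiF C h x * chiF C h (x + a) = -1.
Proof.
move=> oh a0.
have inj : injective (fun x : 'F_p => 1 + a * x^-1).
  by move=> x y /addrI /(mulfI a0) /invr_inj.
have := chi_sum C pr ph oh; rewrite (reindex_inj inj) /= (bigD1 0) //= invr0 mulr0 addr0.
have -> : chiF C h (1 : 'F_p) = 1 by rewrite /chiF oner_eq0 expr1n eqxx.
move=> E; rewrite (bigD1 0) //= {1}/chiF eqxx mul0r add0r.
have -> : \sum_(i | i != 0) chiF C h i * chiF C h (i + a) =
          \sum_(i | i != 0) chiF C h (1 + a * i^-1).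
  apply: eq_bigr => x x0; rewrite -chi_mul //.
  have -> : x * (x + a) = (x * x) * (1 + a * x^-1).
    by field.
  by rewrite !chi_mul // chi_sq // mul1r.
by move/eqP: E; rewrite addrC addr_eq0 => /eqP.
Qed.

Lemma fact_split k :
  (\prod_(i < k.*2) i.+1 = (\prod_(i < k) (i.*2.+2)) * \prod_(i < k) (i.*2.+1))%N.
Proof.
elim: k => [|k IH]; first by rewrite !big_ord0.
rewrite doubleS !big_ord_recr /= IH.
move: (\prod_(i < k) _)%N (\prod_(i < k) _)%N => a b.
lia.
Qed.

Lemma two_pow p (pr : prime p) q (pq : p = q.*2.*2.+3) :
  (2 : 'F_p) ^+ q.*2.+1 = (-1) ^+ q.+1.
Proof.
pose H := \prod_(i < q.*2.+1) (i.+1%:R : 'F_p).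
have H0 : H != 0.
  apply/prodf_neq0 => i _; rewrite Fp_nat0 //; apply/negP => /dvdn_leq.
  by have := ltn_ord i; rewrite pq; lia.
have E1 : H = (\prod_(i < q) (i.*2.+2)%:R) * \prod_(i < q.+1) (i.*2.+1)%:R.
  rewrite /H big_ord_recr /= -natr_prod -natr_prod -natr_prod fact_split.
  by rewrite [in RHS]big_ord_recr /= -!natrM mulnA.
have E2 : (2 : 'F_p) ^+ q.*2.+1 * H = \prod_(i < q + q.+1) ((i.*2.+2)%:R : 'F_p).
  rewrite /H (_ : (q + q.+1 = q.*2.+1)%N); last by lia.
  have -> : (2:'F_p) ^+ q.*2.+1 = \prod_(i < q.*2.+1) (2:'F_p) by rewrite prodr_const card_ord.
  rewrite -big_split /=.
  by apply: eq_bigr => i _; rewrite -natrM; congr (_%:R); lia.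
rewrite big_split_ord /= in E2.
have E3 : \prod_(i < q.+1) ((q + i).*2.+2 %:R : 'F_p) =
          \prod_(i < q.+1) (-1 * (i.*2.+1)%:R).
  rewrite (reindex_inj rev_ord_inj) /=; apply: eq_bigr => i _; rewrite /= mulN1r; apply/eqP; rewrite -subr_eq0 opprK -natrD.
  rewrite Fp_nat0 // pq; apply/dvdnP; exists 1%N; have := ltn_ord i; lia.
rewrite E3 big_split /= prodr_const card_ord in E2.
apply: (mulIf H0); rewrite E2 E1.
by rewrite mulrCA.
Qed.

Definition Lv (C : numClosedFieldType) p h (s X : C) (y : 'F_p) : C :=
  if y == 0 then s else if chiF C h y == 1 then X else - X^-1.

Definition ff (C : numClosedFieldType) (X u w : C) : C :=
  (2 + 2 * u * w) / 4 - (1 + u - w - u * w) / (4 * X ^+ 2) - (1 - u + w - u * w) * X ^+ 2 / 4.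

Lemma L_val (C : numClosedFieldType) p h (s X : C) (y : 'F_p) : y != 0 ->
  (chiF C h y = 1 /\ Lv h s X y = X) \/ (chiF C h y = -1 /\ Lv h s X y = - X^-1).
Proof.
move=> y0; rewrite /Lv /chiF (negbTE y0).
case: (y ^+ h == 1); [left|right]; rewrite ?eqxx ?(negbTE (C_m1 C)) //.
Qed.

Lemma sum_ind (C : numClosedFieldType) p (b : 'F_p) (c : C) :
  \sum_(y : 'F_p) (y == b)%:R * c = c.
Proof.
rewrite (bigD1 b) //= eqxx mul1r big1 ?addr0 // => y /negbTE ->; by rewrite mul0r.
Qed.

Lemma main_sum (C : numClosedFieldType) p (pr : prime p) h (ph : p = h.*2.+1) (oh : odd h)
  (s X : C) (hs : s^* = - s) (hX : X^* = X^-1) (X0 : X != 0) (a : 'F_p) (a0 : a != 0) :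
  \sum_(y : 'F_p) (Lv h s X y)^* * Lv h s X (y + a) =
  p%:R * ff X 0 0 + (ff X 1 1 - ff X 0 0 - (ff X 1 0 - ff X 0 0) - (ff X 0 1 - ff X 0 0)) * (-1)
  + ((s^* * Lv h s X a - ff X 0 (chiF C h a))
  + ((Lv h s X (-a))^* * s - ff X (chiF C h (-a)) 0)).
Proof.
pose A := ff X 0 0. pose B := ff X 1 0 - A. pose B' := ff X 0 1 - A.
pose D := ff X 1 1 - A - B - B'.
have fE : forall u w, ff X u w = A + B * u + B' * w + D * u * w.
  by move=> u w; rewrite /D /B' /B /A /ff; field; rewrite ?mulf_neq0 ?expf_neq0 ?pnatr_eq0.
have pw : forall y, (Lv h s X y)^* * Lv h s X (y + a) =
   A + B * chiF C h y + B' * chiF C h (y + a) + D * (chiF C h y * chiF C h (y + a))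
   + ((y == 0)%:R * (s^* * Lv h s X a - ff X 0 (chiF C h a))
   + (y == -a)%:R * ((Lv h s X (-a))^* * s - ff X (chiF C h (-a)) 0)).
  have c0 : chiF C h (0:'F_p) = 0 by rewrite /chiF eqxx.
  have cXi : (- X^-1)^* = - X.
    have e : (X^-1)^* = X.
      have := fmorphV (@Num.conj C) X; move=> /= ->; by rewrite hX invrK.
    have := raddfN (@Num.conj C) (X^-1); move=> /= ->; by rewrite e.
  have L0 : Lv h s X (0:'F_p) = s by rewrite /Lv eqxx.
  move=> y; rewrite mulrA -fE.
  have [->|y0] := eqVneq y 0.
    rewrite eq_sym oppr_eq0 (negbTE a0) /= add0r c0 L0 mul1r mul0r addr0; ring.
  have [ya|ya] := eqVneq y (-a).
    rewrite ya addNr /= c0 L0 mul1r mul0r add0r; ring.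
  rewrite /= !mul0r !addr0.
  have ya0 : y + a != 0 by rewrite addr_eq0.
  case: (L_val h s X y0) => -[-> ->]; case: (L_val h s X ya0) => -[-> ->];
    rewrite /ff ?cXi ?hX; field; rewrite ?mulf_neq0 ?expf_neq0 ?pnatr_eq0 //.
have eA : A = ff X 0 0 by [].
have eB : B = ff X 1 0 - ff X 0 0 by [].
have eB' : B' = ff X 0 1 - ff X 0 0 by [].
have eD : D = ff X 1 1 - ff X 0 0 - (ff X 1 0 - ff X 0 0) - (ff X 0 1 - ff X 0 0) by [].
clearbody A B B' D.
rewrite (eq_bigr _ (fun y _ => pw y)) !big_split /= -!mulr_sumr sumr_const card_Fp //.
rewrite chi_sum // chi_shift chi_sum // chi_corr // !sum_ind.
rewrite -eD -?eB' -?eB -?eA mulr_natl; ring.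
Qed.


Lemma conj_facts (C : numClosedFieldType) (X : C) (hX : X^* = X^-1) :
  (X^-1)^* = X /\ (- X^-1)^* = - X.
Proof.
have e : (X^-1)^* = X.
  have := fmorphV (@Num.conj C) X; move=> /= ->; by rewrite hX invrK.
split=> //; have := raddfN (@Num.conj C) (X^-1); move=> /= ->; by rewrite e.
Qed.

Lemma main_val (C : numClosedFieldType) p (pr : prime p) h (ph : p = h.*2.+1) (oh : odd h)
  (s X : C) (hs : s^* = - s) (hX : X^* = X^-1) (X0 : X != 0) (a : 'F_p) (a0 : a != 0) :
  \sum_(y : 'F_p) (Lv h s X y)^* * Lv h s X (y + a) =
  if chiF C h a == 1 then rhs7 p s X else rhs3 p s X.
Proof.
rewrite main_sum // hs.
have ma : - a = -1 * a by rewrite mulN1r.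
have na : - a != 0 by rewrite oppr_eq0.
have cna : chiF C h (- a) = - chiF C h a by rewrite ma chi_mul // chi_neg1 // mulN1r.
have [cX1 cX2] := conj_facts hX.
case: (L_val h s X a0) => -[ca La]; case: (L_val h s X na) => -[cb Lb];
  move: (cna); rewrite ca cb => E; try (exfalso; move/eqP: E; rewrite ?opprK ?(eq_sym 1);
    by rewrite (negbTE (C_m1 C))).
- rewrite ?ca ?cb La Lb eqxx cX2 /ff /rhs7; field; by rewrite ?mulf_neq0 ?expf_neq0 ?pnatr_eq0.
- rewrite ?ca ?cb La Lb (negbTE (C_m1 C)) hX /ff /rhs3; field; by rewrite ?mulf_neq0 ?expf_neq0 ?pnatr_eq0.
Qed.

Lemma sumF (C : numClosedFieldType) p (pr : prime p) (G : 'F_p -> C) :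
  \sum_(k < p) G (k%:R) = \sum_(y : 'F_p) G y.
Proof.
rewrite [RHS](eq_bigr (fun y : 'F_p => G ((val y)%:R))); last first.
  by move=> y _; have [_ {1}->] := Fp_val pr y.
rewrite -(big_mkord xpredT (fun i => G i%:R)) /=.
rewrite -(big_mkord xpredT (fun i => G i%:R)) /=.
by rewrite Fp_cast.
Qed.

Lemma qres_F p (pr : prime p) k :
  [exists i : 'I_p, ((i * i) %% p == k %% p)%N] = [exists y : 'F_p, y * y == k%:R].
Proof.
apply/existsP/existsP => -[i Hi].
  by exists (i%:R); rewrite -natrM Fp_nat_eq.
have [lt Ei] := Fp_val pr i.
exists (Ordinal lt) => /=; rewrite -Fp_nat_eq // natrM -Ei //.
Qed.

Lemma leg_chi (C : numClosedFieldType) p (pr : prime p) h (ph : p = h.*2.+1) k :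
  ((legendre p k)%:~R : C) = chiF C h (k%:R : 'F_p).
Proof.
rewrite /legendre /chiF Fp_nat0 // /dvdn.
case: eqP => [_|/eqP nz] //=.
have nz' : (k%:R : 'F_p) != 0 by rewrite Fp_nat0.
rewrite /qres nz /= qres_F // -(euler pr ph nz').
by case: (_ == 1).
Qed.

Lemma legvec_Lv (C : numClosedFieldType) p (pr : prime p) h (ph : p = h.*2.+1) (s X : C) k :
  legvec p s X k = Lv h s X (k%:R : 'F_p).
Proof.
rewrite /legvec /Lv Fp_nat0 // /dvdn; case: eqP => // /eqP nz.
rewrite -leg_chi //; congr (if _ then _ else _).
by apply/eqP/eqP => [->//|H]; apply: (@intr_inj C); rewrite H.
Qed.

Lemma rhs_swap (C : numClosedFieldType) p (s X : C) : X != 0 ->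
  rhs7 p s X = rhs3 p s (- X^-1) /\ rhs3 p s X = rhs7 p s (- X^-1).
Proof.
move=> X0; rewrite /rhs7 /rhs3; split; field;
  by rewrite ?mulf_neq0 ?expf_neq0 ?pnatr_eq0 ?oppr_eq0 ?invr_eq0.
Qed.

Unset Implicit Arguments.

Theorem lemma1 (C : numClosedFieldType) (p : nat) (s x1 : C) (j : nat) :
  prime p -> (p %% 4 = 3)%N -> `|x1| = 1 ->
  s ^+ 2 = - 2 - sqrtC (p.+1)%:R ->
  [/\ (legendre p j = 1 -> (p %% 8 = 3)%N -> corr p s x1 j = rhs3 p s x1),
      (legendre p j = 1 -> (p %% 8 = 7)%N -> corr p s x1 j = rhs7 p s x1),
      (legendre p j = -1 -> (p %% 8 = 3)%N -> corr p s x1 j = rhs3 p s (- x1^-1))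
    & (legendre p j = -1 -> (p %% 8 = 7)%N -> corr p s x1 j = rhs7 p s (- x1^-1))].
Proof.
move=> pr p4 nx1 hs2.
have [n pn] : exists n, p = n.*2.*2.+3.
  by exists (p %/ 4)%N; lia.
pose h := n.*2.+1.
have ph : p = h.*2.+1 by rewrite /h; lia.
have oh : odd h by rewrite /h /= odd_double.
have X0 : x1 != 0 by rewrite -normr_eq0 nx1 oner_eq0.
have hX : x1^* = x1^-1 by rewrite invC_norm nx1 expr1n invr1 mul1r.
have hs : s^* = - s.
  set r := - 2 - sqrtC (p.+1)%:R in hs2.
  have rlt : r < 0.
    rewrite /r; have := sqrtC_ge0 (p.+1%:R : C); rewrite ler0n => /= sq.
    by rewrite -opprD oppr_lt0; apply: ltr_wpDr => //; rewrite ltr0n.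
  have rc : r^* = r by apply: conj_Creal; apply: ltr0_real.
  have : (s^*) ^+ 2 == s ^+ 2.
    by have := rmorphXn (@Num.conj C) 2 s; move=> /= <-; rewrite hs2 rc.
  rewrite eqf_sqr => /orP[/eqP sr|/eqP //].
  have : s \is Num.real by rewrite CrealE sr.
  by rewrite realEsqr hs2 real_leNgt ?rlt ?real0 ?ltr0_real.
have two0 : (2 : 'F_p) != 0.
  by rewrite Fp_nat0 //; apply/negP => /dvdn_leq; rewrite pn; lia.
have chi2 : chiF C h (2 : 'F_p) = if odd n then 1 else -1.
  rewrite /chiF (negbTE two0) /h (two_pow pr pn) -signr_odd /=.
  by case: (odd n); rewrite ?expr0 ?expr1 ?eqxx // (negbTE (Fp_m1 pr ph)).
pose a : 'F_p := (2 * j)%:R.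
have corrE : corr p s x1 j = \sum_(y : 'F_p) (Lv h s x1 y)^* * Lv h s x1 (y + a).
  rewrite /corr -(sumF pr (fun y => (Lv h s x1 y)^* * Lv h s x1 (y + a))).
  by apply: eq_bigr => k _; rewrite !(legvec_Lv pr ph) natrD.
have Ha : forall t : int, legendre p j = t -> t != 0 ->
    a != 0 /\ chiF C h a = (if odd n then 1 else -1) * t%:~R.
  move=> t lt t0; split.
    rewrite /a Fp_nat0 // Euclid_dvdM // negb_or; apply/andP; split.
      by apply/negP => /dvdn_leq; rewrite pn; lia.
    apply/negP => /dvdnP [m jm]; move: lt t0; rewrite /legendre jm modnMl eqxx => <-.
    by rewrite eqxx.
  by rewrite /a natrM chi_mul // chi2 -lt (leg_chi C pr ph).
have [sw1 sw2] := rhs_swap p s X0.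
have n3 : (p %% 8 = 3)%N -> odd n = false.
  move=> p8; have : (n %% 2 = 0)%N by lia.
  by rewrite modn2; case: (odd n).
have n7 : (p %% 8 = 7)%N -> odd n = true.
  move=> p8; have : (n %% 2 = 1)%N by lia.
  by rewrite modn2; case: (odd n).
split=> lj p8; have [a0 ca] := Ha _ lj isT; rewrite corrE (main_val pr ph oh hs hX X0 a0) ca.
- by rewrite n3 // mulr1z mulN1r (negbTE (C_m1 C)).
- by rewrite n7 // mulr1z mul1r eqxx.
- by rewrite n3 // mulrN1z mulrNN mul1r eqxx sw1.
- by rewrite n7 // mulrN1z mul1r (negbTE (C_m1 C)) sw2.
Qed.
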